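(* Let $f_{s_1d}, f_{s_1r}, f_{rd}, g_{rd}^{s_1}, g_{s_1d}^{r}\in[0,1]$ satisfy $0\le g_{s_1d}^{r}\le f_{s_1d}$, $0\le g_{rd}^{s_1}< f_{rd}$, set $T_1=(1-f_{s_1d})f_{s_1r}$ and assume $T_1>0$. For $\alpha\in[0,1]$ define $$\mu_1^{\mathrm{DBC}}(\alpha)=(1-\alpha)(f_{s_1d}+T_1)+\alpha\,g_{s_1d}^{r},\qquad \mu_{u_1}^{\mathrm{DBC}}(\alpha)=\frac{\alpha f_{rd}}{(1-\alpha)T_1+\alpha f_{rd}-\alpha\,g_{rd}^{s_1}}\,\mu_1^{\mathrm{DBC}}(\alpha).$$ If $$f_{rd}-g_{rd}^{s_1}\le \frac{(T_1+g_{rd}^{s_1})^2(f_{s_1d}+T_1)}{T_1(f_{s_1d}+T_1-g_{s_1d}^{r})}-(T_1+2g_{rd}^{s_1}),$$ then $$\max_{0\le\alpha\le 1}\min\{\mu_1^{\mathrm{DBC}}(\alpha),\mu_{u_1}^{\mathrm{DBC}}(\alpha)\}=\Big(1-\frac{T_1}{T_1+g_{rd}^{s_1}}\Big)(f_{s_1d}+T_1)+\frac{T_1}{T_1+g_{rd}^{s_1}}\,g_{s_1d}^{r},$$ attained at $\alpha^*=T_1/(T_1+g_{rd}^{s_1})$.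
   Context: $f_{mn}$ denotes the probability that link $(m,n)$ is not in outage and $g_{mn}^{I}$ the probability that it is not in outage under simultaneous interference from node $I$ (so $g_{mn}^I\le f_{mn}$). This is the optimization of the maximal stable throughput of a single source $s_1$ in the decision-based cooperative scheme over the probability $\alpha$ that the relay (without sensing) transmits in a slot. *)

(* Defs.v *)
From Stdlib Require Import Reals Lra.
Open Scope R_scope.

Definition T1 (fs1d fs1r : R) : R := (1 - fs1d) * fs1r.

Definition mu1 (fs1d fs1r gs1dr alpha : R) : R :=
  (1 - alpha) * (fs1d + T1 fs1d fs1r) + alpha * gs1dr.

Definition muu1 (fs1d fs1r frd grds1 gs1dr alpha : R) : R :=
  alpha * frd / ((1 - alpha) * T1 fs1d fs1r + alpha * frd - alpha * grds1)
  * mu1 fs1d fs1r gs1dr alpha.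

(* Main.v *)
Require Import Defs.
From Stdlib Require Import Reals Lra.
Open Scope R_scope.

Theorem lemma2 (fs1d fs1r frd grds1 gs1dr : R) :
  0 <= fs1d <= 1 -> 0 <= fs1r <= 1 -> 0 <= frd <= 1 ->
  0 <= grds1 <= 1 -> 0 <= gs1dr <= 1 ->
  gs1dr <= fs1d -> grds1 < frd ->
  0 < T1 fs1d fs1r ->
  frd - grds1 <=
    (T1 fs1d fs1r + grds1) ^ 2 * (fs1d + T1 fs1d fs1r)
      / (T1 fs1d fs1r * (fs1d + T1 fs1d fs1r - gs1dr))
    - (T1 fs1d fs1r + 2 * grds1) ->
  let astar := T1 fs1d fs1r / (T1 fs1d fs1r + grds1) in
  let value := (1 - astar) * (fs1d + T1 fs1d fs1r) + astar * gs1dr in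
  (0 <= astar <= 1 /\
   Rmin (mu1 fs1d fs1r gs1dr astar) (muu1 fs1d fs1r frd grds1 gs1dr astar) = value /\
   forall alpha : R, 0 <= alpha <= 1 ->
     Rmin (mu1 fs1d fs1r gs1dr alpha) (muu1 fs1d fs1r frd grds1 gs1dr alpha) <= value).
Proof.
  intros H1 H2 H3 H4 H5 Hg HG HT Hc astar value.
  unfold muu1, mu1 in *.
  set (T := T1 fs1d fs1r) in *.
  set (F := fs1d + T) in *.
  set (c := F - gs1dr).
  set (s := T + grds1) in *.
  assert (Hs : 0 < s) by (unfold s; lra).
  assert (Hcp : T <= c) by (unfold c, F; lra).
  assert (Has : astar * s = T) by (unfold astar; field; lra).
  assert (Ha0 : 0 < astar) by (unfold astar; apply Rdiv_lt_0_compat; lra).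
  assert (Ha1 : astar <= 1).
  { destruct (Rle_or_lt astar 1) as [h|h]; [exact h|].
    assert (astar * s > 1 * s) by (apply Rmult_lt_compat_r; lra). unfold s in *; lra. }
  assert (Hcond : c * T * (frd - grds1 + T + 2 * grds1) <= F * s ^ 2).
  { set (q := s ^ 2 * F / (T * (F - gs1dr))) in *.
    assert (Hq : q * (T * c) = s ^ 2 * F) by (assert (F - gs1dr <> 0) by (unfold c in Hcp; lra); unfold q, c; field; split; lra).
    assert (Hl : frd - grds1 + T + 2 * grds1 <= q) by lra.
    assert (Htc : 0 <= T * c) by nra.
    pose proof (Rmult_le_compat_r _ _ _ Htc Hl). nra. }
  assert (Hval : value = F - c * astar) by (unfold value, c; ring).
  assert (Hvpos : 0 <= value) by (unfold value; assert (0 <= F) by (unfold F; lra);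
    assert (0 <= (1 - astar) * F) by (apply Rmult_le_pos; lra);
    assert (0 <= astar * gs1dr) by (apply Rmult_le_pos; lra); lra).
  split; [lra|split].
  - assert (Hden : (1 - astar) * T + astar * frd - astar * grds1 = astar * frd).
    { assert (Hx : astar * T + astar * grds1 = T) by (transitivity (astar * s); [unfold s; ring | exact Has]).
      replace ((1 - astar) * T + astar * frd - astar * grds1) with
        (T - (astar * T + astar * grds1) + astar * frd) by ring.
      rewrite Hx; ring. }
    rewrite Hden.
    replace (astar * frd / (astar * frd)) with 1 by (field; nra).
    rewrite Rmult_1_l, Rmin_left; [reflexivity|lra].
  - intros alpha Hal.
    destruct (Rle_lt_dec astar alpha) as [Hle|Hlt].
    + eapply Rle_trans; [apply Rmin_l|].
      rewrite Hval.
      assert (0 <= (alpha - astar) * c) by (apply Rmult_le_pos; lra).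
      unfold c in *. nra.
    + eapply Rle_trans; [apply Rmin_r|].
      set (den := (1 - alpha) * T + alpha * frd - alpha * grds1).
      assert (Hd : 0 < den) by (unfold den; nra).
      set (m := (1 - alpha) * F + alpha * gs1dr).
      assert (Hm : m = F - c * alpha) by (unfold m, c; ring).
      unfold Rdiv. rewrite Rmult_assoc, (Rmult_comm (/ den)), <- Rmult_assoc.
      apply (Rmult_le_reg_r den); [exact Hd|].
      rewrite Rmult_assoc, Rinv_l, Rmult_1_r by lra.
      set (E := frd - grds1 - T).
      assert (Hden2 : den = T + alpha * E) by (unfold den, E; ring).
      set (Pp := (F - c * astar) * E - frd * F + 2 * frd * c * astar).
      assert (HPp : Pp * s = - F * s ^ 2 + c * T * (frd - grds1 + T + 2 * grds1)).
      { transitivity ((F*s - c*(astar*s))*E - frd*F*s + 2*frd*c*(astar*s)); [unfold Pp; ring|].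
        rewrite Has. unfold E, s. ring. }
      assert (HPn : Pp <= 0) by nra.
      assert (Hid : value * den - alpha * frd * m
                    = Pp * (alpha - astar) + frd * c * (alpha - astar) ^ 2).
      { rewrite Hval, Hden2, Hm. unfold Pp, E.
        assert (Hz : T + astar * (frd - grds1 - T) - astar * frd = 0).
        { transitivity (T - astar * s); [unfold s; ring| rewrite Has; ring]. }
        transitivity ((F - c*astar) * (T + astar * (frd - grds1 - T) - astar * frd)
                      + (Pp * (alpha - astar) + frd * c * (alpha - astar) ^ 2)).
        - unfold Pp, E. ring.
        - rewrite Hz. unfold Pp, E. ring. }
      assert (0 <= Pp * (alpha - astar)) by nra.
      assert (0 <= frd * c * (alpha - astar) ^ 2) by
        (apply Rmult_le_pos; [nra| apply pow2_ge_0]).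
      lra.
Qed.
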